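(* Let $k\ge 3$, let $G_1,\ldots,G_k$ be a finite sequence of pairwise disjoint connected graphs and let $x_i\in V(G_i)$. Let $G$ be the circuit of the graphs $\{G_i\}_{i=1}^k$ with respect to the vertices $\{x_i\}_{i=1}^k$. Then $$SO(G)\geq 2k\sqrt{2}+\sum_{i=1}^{k}SO(G_i),$$ and equality holds if and only if $G_i=K_1$ for every $1\le i\le k$.
   Context: All graphs are finite and simple. For a graph $H$, $SO(H)=\sum_{uv\in E(H)}\sqrt{d_u^2+d_v^2}$, where $d_u$ is the degree of $u$ in $H$ (the Sombor index). The circuit of $G_1,\ldots,G_k$ with respect to $x_1,\ldots,x_k$ is the graph obtained from the disjoint union of $G_1,\ldots,G_k$ and a cycle $C_k$ with vertices $c_1,\ldots,c_k$ in cyclic order, by identifying $x_i$ with $c_i$ for each $i$. *)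

(* Defs.v *)
From mathcomp Require Import all_boot all_order all_algebra.
Set Implicit Arguments. Unset Strict Implicit. Unset Printing Implicit Defensive.
Import Order.TTheory GRing.Theory Num.Theory.
Local Open Scope ring_scope.

(* A simple graph on a finite type T is a symmetric irreflexive relation e. *)

Definition deg (T : finType) (e : rel T) (u : T) : nat := #|[set v | e u v]|.

(* Sombor index: sum over edges uv of sqrt(d_u^2 + d_v^2).  Each (undirected)
   edge is counted twice in the sum over ordered adjacent pairs, hence 1/2. *)
Definition SO (R : rcfType) (T : finType) (e : rel T) : R :=
  2^-1 * \sum_(u : T) \sum_(v : T | e u v)
     Num.sqrt ((deg e u)%:R ^+ 2 + (deg e v)%:R ^+ 2).

Definition cyc_adj (k : nat) (i j : 'I_k) : bool :=
  ((val j == (val i).+1 %% k) || (val i == (val j).+1 %% k))%N.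

(* The circuit of G_1..G_k (vertex types T i, edge relations e i) w.r.t. x_i:
   vertex set is the disjoint union {i : 'I_k & T i}; edges are the edges of
   each G_i, plus the cycle edges x_i x_j for i, j adjacent in C_k
   (c_i identified with x_i). *)
Definition circuit_rel (k : nat) (T : 'I_k -> finType)
    (e : forall i, rel (T i)) (x : forall i, T i) : rel {i : 'I_k & T i} :=
  fun u v =>
    ((tag u == tag v) && e (tag u) (tagged u) (tagged_as u v))
    || [&& tagged u == x (tag u), tagged v == x (tag v) & cyc_adj (tag u) (tag v)].

(* Main.v *)
Require Import Defs.
From mathcomp Require Import all_boot all_order all_algebra.
From mathcomp Require Import zify ring lra.
Set Implicit Arguments. Unset Strict Implicit. Unset Printing Implicit Defensive.
Import Order.TTheory GRing.Theory Num.Theory.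
Local Open Scope ring_scope.

Lemma sum_tag (R : nmodType) (I : finType) (T : I -> finType) (G : {i : I & T i} -> R) :
  \sum_(u : {i : I & T i}) G u = \sum_(i : I) \sum_(a : T i) G (Tagged T a).
Proof.
rewrite (sig_big_dep (fun=> true) (fun _ _ => true) (fun i a => G (Tagged T a))) /=.
by apply: eq_bigr => -[i a].
Qed.

Lemma modS k m : (m < k.+1)%N -> (m.+1 %% k.+1 = if m == k then 0 else m.+1)%N.
Proof. by move=> h; case: eqP => [->|ne]; [exact: modnn | apply: modn_small; lia]. Qed.

Lemma modS' k m : (m < k.+1)%N -> (m = k /\ m.+1 %% k.+1 = 0 \/ m < k /\ m.+1 %% k.+1 = m.+1)%N.
Proof. by move=> h; rewrite modS //; case: eqP => ?; [left|right]; lia. Qed.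

Lemma nbrs (k : nat) (i : 'I_k) : (3 <= k)%N ->
  exists j1 j2 : 'I_k, [/\ cyc_adj i j1, cyc_adj i j2, j1 != j2 &
     forall j, cyc_adj i j -> j = j1 \/ j = j2].
Proof.
case: k i => [|k] i // hk.
have hi := ltn_ord i.
pose v1 := (if nat_of_ord i == k then 0 else (nat_of_ord i).+1)%N.
pose v2 := (if nat_of_ord i == 0%N then k else (nat_of_ord i).-1)%N.
have h1 : (nat_of_ord i = k /\ v1 = 0 \/ i < k /\ v1 = i.+1)%N.
  by rewrite /v1; case: eqP => ?; [left|right]; lia.
have h2 : (nat_of_ord i = 0 /\ v2 = k \/ 0 < i /\ v2 = i.-1)%N.
  by rewrite /v2; case: eqP => ?; [left|right]; lia.
have e1 : nat_of_ord (inord v1 : 'I_k.+1) = v1 by rewrite inordK //; lia.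
have e2 : nat_of_ord (inord v2 : 'I_k.+1) = v2 by rewrite inordK //; lia.
have hv2 : (v2 < k.+1)%N by lia.
have := modS' hi; have := modS' hv2 => m2 m1.
exists (inord v1), (inord v2); rewrite /cyc_adj /=; split.
- rewrite e1; apply/orP; left; apply/eqP; lia.
- rewrite e2; apply/orP; right; apply/eqP; lia.
- rewrite -(inj_eq val_inj) /= e1 e2; apply/eqP; lia.
- move=> j; have hj := ltn_ord j; have := modS' hj => mj.
  move=> /orP [/eqP h | /eqP h]; [left|right]; apply: val_inj => /=; rewrite ?e1 ?e2; lia.
Qed.

Lemma cyc_irr (k : nat) (i : 'I_k) : (3 <= k)%N -> cyc_adj i i = false.
Proof.
case: k i => [|k] i // hk; have hi := ltn_ord i.
rewrite /cyc_adj /= orbb; have := modS' hi => m; apply/eqP; lia.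
Qed.

Lemma Tagged_inj (I : finType) (T : I -> finType) (i : I) : injective (@Tagged I i T).
Proof. by move=> a b /eqP; rewrite eq_Tagged => /eqP. Qed.

Lemma deg_lb (k : nat) (T : 'I_k -> finType) (e : forall i, rel (T i)) (x : forall i, T i)
  (i : 'I_k) (a : T i) : (3 <= k)%N ->
  (deg (e i) a + (if a == x i then 2 else 0) <= deg (circuit_rel e x) (Tagged T a))%N.
Proof.
move=> hk.
set S := [set v | circuit_rel e x (Tagged T a) v].
set Img := [set Tagged T b | b in [set b | e i a b]].
have sub1 : Img \subset S.
  apply/subsetP => v /imsetP [b]; rewrite inE => hb ->.
  by rewrite inE /circuit_rel /= eqxx tagged_asE hb.
have c1 : #|Img| = deg (e i) a by rewrite card_imset //; apply: Tagged_inj.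
rewrite -c1 /deg -/S.
case: eqP => [ha|_]; last by rewrite addn0 subset_leq_card.
have [j1 [j2 [a1 a2 n12 _]]] := nbrs i hk.
have nI : forall j, cyc_adj i j -> Tagged T (x j) \notin Img.
  move=> j hj; apply/negP => /imsetP [b _ /(congr1 tag) /= hji].
  by move: hj; rewrite hji cyc_irr.
have sub2 : Tagged T (x j1) |: (Tagged T (x j2) |: Img) \subset S.
  apply/subsetP => v; rewrite !inE => /orP [/eqP -> | /orP [/eqP -> | hv]].
  - by rewrite /circuit_rel /= ha !eqxx a1 orbT.
  - by rewrite /circuit_rel /= ha !eqxx a2 orbT.
  - by move/subsetP: sub1 => /(_ v hv); rewrite inE.
have := subset_leq_card sub2; rewrite !cardsU1 !inE (negbTE (nI _ a1)) (negbTE (nI _ a2)).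
have -> : (Tagged T (x j1) == Tagged T (x j2)) = false.
  by apply/negbTE; apply: contra n12 => /eqP /(congr1 tag) /= ->.
move=> h; rewrite addnC; exact: h.
Qed.

Definition Arel (k : nat) (T : 'I_k -> finType) (e : forall i, rel (T i))
  : rel {i : 'I_k & T i} :=
  fun u v => (tag u == tag v) && e (tag u) (tagged u) (tagged_as u v).
Definition Brel (k : nat) (T : 'I_k -> finType) (x : forall i, T i)
  : rel {i : 'I_k & T i} :=
  fun u v => [&& tagged u == x (tag u), tagged v == x (tag v) & cyc_adj (tag u) (tag v)].

Lemma sq_mono (R : rcfType) (m n : nat) : (m <= n)%N -> (m%:R ^+ 2 <= n%:R ^+ 2 :> R).
Proof. by move=> h; rewrite -!natrX ler_nat leq_sqr. Qed.

Lemma split_sum (R : rcfType) (k : nat) (T : 'I_k -> finType) (e : forall i, rel (T i))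
  (x : forall i, T i) (F : {i : 'I_k & T i} -> {i : 'I_k & T i} -> R) : (3 <= k)%N ->
  \sum_u \sum_(v | circuit_rel e x u v) F u v =
  \sum_u \sum_(v | Arel e u v) F u v + \sum_u \sum_(v | Brel x u v) F u v.
Proof.
move=> hk; rewrite -big_split /=; apply: eq_bigr => u _.
rewrite (bigID (Arel e u)) /=; congr (_ + _); apply: eq_bigl => v;
  rewrite /circuit_rel /Arel /Brel.
- by case: (tag u == tag v); case: (e (tag u) (tagged u) (tagged_as u v)); rewrite /= ?andbF.
- case: eqP => [htag|] /=; last by rewrite andbT.
  rewrite [X in cyc_adj X _]htag cyc_irr // !andbF orbF; by case: (e _ _ _).
Qed.

Lemma inner_A (R : rcfType) (k : nat) (T : 'I_k -> finType) (e : forall i, rel (T i))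
  (i : 'I_k) (a : T i) (F : {i : 'I_k & T i} -> R) :
  \sum_(v | Arel e (Tagged T a) v) F v = \sum_(b | e i a b) F (Tagged T b).
Proof.
rewrite big_mkcond sum_tag (bigD1 i) //= [X in _ + X]big1 ?addr0.
  by rewrite [RHS]big_mkcond; apply: eq_bigr => b _; rewrite /Arel /= eqxx tagged_asE.
by move=> j hj; apply: big1 => b _; rewrite /Arel /= eq_sym (negbTE hj).
Qed.

Lemma dsum_ge_term (R : rcfType) (U W : finType) (P : U -> pred W) (F : U -> W -> R) u0 v0 :
  (forall u v, P u v -> 0 <= F u v) -> P u0 v0 ->
  F u0 v0 <= \sum_u \sum_(v | P u v) F u v.
Proof.
move=> h0 hP; rewrite (bigD1 u0) //= (bigD1 v0) //= -addrA lerDl.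
apply: addr_ge0; first by apply: sumr_ge0 => v /andP [] /h0.
by apply: sumr_ge0 => u _; apply: sumr_ge0 => v /h0.
Qed.

Lemma connect_nbr (T : finType) (e : rel T) a b : connect e a b -> a != b -> exists c, e a c.
Proof.
move=> /connectP [[|c p]] /=; first by move=> _ ->; rewrite eqxx.
by move=> /andP [h _] _ _; exists c.
Qed.

Lemma degB (k : nat) (T : 'I_k -> finType) (e : forall i, rel (T i)) (x : forall i, T i) u v :
  (3 <= k)%N -> Brel x u v ->
  (2 <= deg (circuit_rel e x) u)%N /\ (2 <= deg (circuit_rel e x) v)%N.
Proof.
move=> hk; case: u => i a; case: v => j b; rewrite /Brel /= => /and3P [/eqP ha /eqP hb _].
subst a b; split.
- by have := deg_lb e x (x i) hk; rewrite eqxx; exact: leq_trans (leq_addl _ _).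
- by have := deg_lb e x (x j) hk; rewrite eqxx; exact: leq_trans (leq_addl _ _).
Qed.

Lemma cycle_count (R : rcfType) (k : nat) (T : 'I_k -> finType) (x : forall i, T i) (c : R) :
  (3 <= k)%N -> 0 <= c ->
  (c + c) *+ k <= \sum_u \sum_(v | Brel x u v) c.
Proof.
move=> hk c0; rewrite sum_tag -[k in _ *+ k]card_ord -sumr_const.
apply: ler_sum => i _; rewrite (bigD1 (x i)) //= -[X in X <= _]addr0.
apply: lerD; last by apply: sumr_ge0 => a _; apply: sumr_ge0.
have [j1 [j2 [a1 a2 n12 _]]] := nbrs i hk.
have hn : Tagged T (x j2) != Tagged T (x j1).
  by apply: contra n12 => /eqP /(congr1 tag) /= ->.
rewrite (bigD1 (Tagged T (x j1))) /=; last by rewrite /Brel /= !eqxx a1.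
rewrite (bigD1 (Tagged T (x j2))) /=; last by rewrite /Brel /= !eqxx a2 hn.
rewrite addrA lerDl; exact: sumr_ge0.
Qed.

Theorem mainTheorem4 (R : rcfType) (k : nat) (T : 'I_k -> finType)
    (e : forall i, rel (T i)) (x : forall i, T i) :
  (3 <= k)%N ->
  (forall i, symmetric (e i)) ->
  (forall i, irreflexive (e i)) ->
  (forall i (a b : T i), connect (e i) a b) ->
  (2 * k%:R * Num.sqrt 2 + \sum_(i < k) SO R (e i) <= SO R (circuit_rel e x))
  /\ (SO R (circuit_rel e x) = 2 * k%:R * Num.sqrt 2 + \sum_(i < k) SO R (e i)
      <-> (forall i, #|T i| = 1%N)).
Proof.
move=> hk hsym hirr hconn.
set E := circuit_rel e x.
pose s := fun u v => Num.sqrt ((deg E u)%:R ^+ 2 + (deg E v)%:R ^+ 2) : R.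
pose c : R := Num.sqrt (2 ^+ 2 + 2 ^+ 2).
have c0 : 0 <= c := sqrtr_ge0 _.
have cE : c = 2 * Num.sqrt 2.
  rewrite /c (_ : 2 ^+ 2 + 2 ^+ 2 = 2 ^+ 2 * 2 :> R); last by ring.
  by rewrite sqrtrM ?sqr_ge0 // sqrtr_sqr ger0_norm.
pose P1 := \sum_u \sum_(v | Arel e u v) s u v.
pose P2 := \sum_u \sum_(v | Brel x u v) s u v.
have hSO : SO R E = 2^-1 * (P1 + P2).
  by rewrite /SO; congr (_ * _); exact: split_sum.
pose Q := \sum_(i < k) \sum_(a : T i) \sum_(b | e i a b)
   Num.sqrt ((deg (e i) a)%:R ^+ 2 + (deg (e i) b)%:R ^+ 2) : R.
have hL1 : \sum_(i < k) SO R (e i) = 2^-1 * Q by rewrite /SO -mulr_sumr.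
have hP1 : Q <= P1.
  rewrite /P1 sum_tag; apply: ler_sum => i _; apply: ler_sum => a _.
  rewrite inner_A; apply: ler_sum => b _.
  rewrite /s ler_sqrt; last by apply: addr_ge0; apply: sqr_ge0.
  apply: lerD; apply: sq_mono.
  - exact: leq_trans (leq_addr _ _) (deg_lb e x a hk).
  - exact: leq_trans (leq_addr _ _) (deg_lb e x b hk).
pose X := \sum_u \sum_(v | Brel x u v) c.
pose D := \sum_u \sum_(v | Brel x u v) (s u v - c).
have hD : P2 = X + D.
  rewrite /P2 /X /D -big_split /=; apply: eq_bigr => u _.
  rewrite -big_split /=; apply: eq_bigr => v _; by rewrite addrC subrK.
have tpos : forall u v, Brel x u v -> 0 <= s u v - c.
  move=> u v /(degB e hk) [hu hv]; rewrite subr_ge0 /s /c ler_sqrt; last first.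
    by apply: addr_ge0; apply: sqr_ge0.
  by apply: lerD; apply: sq_mono.
have hD0 : 0 <= D.
  by apply: sumr_ge0 => u _; apply: sumr_ge0 => v /tpos.
have hC : (c + c) *+ k <= X := cycle_count x hk c0.
have key : 2 * k%:R * Num.sqrt 2 + \sum_(i < k) SO R (e i) = 2^-1 * (Q + (c + c) *+ k).
  rewrite hL1 -[_ *+ k]mulr_natr cE; by field.
have part1 : 2 * k%:R * Num.sqrt 2 + \sum_(i < k) SO R (e i) <= SO R E.
  rewrite key hSO hD; lra.
split => //; split.
- move=> heq.
  have hD1 : D <= 0 by move: heq; rewrite key hSO hD; lra.
  move=> i.
  have hdeg : deg (e i) (x i) = 0%N.
    apply/eqP; rewrite -leqn0 leqNgt; apply/negP => hpos.
    have [j1 [j2 [a1 _ _ _]]] := nbrs i hk.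
    have hB : Brel x (Tagged T (x i)) (Tagged T (x j1)) by rewrite /Brel /= !eqxx a1.
    have := dsum_ge_term tpos hB; rewrite -/D => ht.
    have : 0 < s (Tagged T (x i)) (Tagged T (x j1)) - c; last by lra.
    have [_ hv] := degB e hk hB.
    have hu := deg_lb e x (x i) hk; rewrite eqxx -/E in hu; rewrite -/E in hv.
    rewrite subr_gt0 /s /c ltr_sqrt; last first.
      by apply: addr_gt0; rewrite exprn_gt0 // ltr0n; lia.
    apply: ltr_leD; last by apply: sq_mono.
    by rewrite -!natrX ltr_nat ltn_sqr; lia.
  have nb : forall b, ~~ e i (x i) b.
    move=> b; apply/negP => hb.
    move: hdeg; rewrite /deg => /eqP; rewrite cards_eq0 => /eqP h0.
    by have := in_set0 b; rewrite -h0 inE hb.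
  have all : forall b, b = x i.
    move=> b; case: (eqVneq (x i) b) => [//|hne].
    by have [c1 hc1] := connect_nbr (hconn i (x i) b) hne; move: (nb c1); rewrite hc1.
  apply/eqP; rewrite eqn_leq; apply/andP; split.
  + by apply/fintype_le1P => y z; rewrite (all z) (all y).
  + by apply/card_gt0P; exists (x i).
- move=> h1.
  have alleq : forall i (a b : T i), a = b.
    move=> i a b; have : (#|T i| <= 1)%N by rewrite h1.
    by move/fintype_le1P => hy; exact: hy b a.
  have hS0 : \sum_(i < k) SO R (e i) = 0.
    apply: big1 => i _; rewrite /SO big1 ?mulr0 // => a _.
    by apply: big1 => b; rewrite (alleq _ b a) hirr.
  have degle2 : forall u, (deg E u <= 2)%N.
    case=> i a.
    have [j1 [j2 [_ _ _ hj]]] := nbrs i hk.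
    have sub : [set v | E (existT _ i a) v] \subset [set Tagged T (x j1); Tagged T (x j2)].
      apply/subsetP; case=> j b; rewrite !inE /E /circuit_rel /=.
      case/orP => [/andP [_ he] | /and3P [_ /eqP hb hc]].
        by move: (tagged_as _ _) he => t; rewrite (alleq i t a) hirr.
      by subst b; case: (hj _ hc) => ->; rewrite eqxx ?orbT.
    apply: leq_trans (subset_leq_card sub) _.
    by rewrite cards2; case: (_ != _).
  have hup : SO R E <= 2^-1 * ((c *+ 2) *+ k).
    rewrite /SO ler_pM2l ?invr_gt0 ?ltr0n //.
    apply: le_trans (_ : \sum_u c *+ 2 <= _); last first.
      rewrite (_ : \sum_u c *+ 2 = \sum_i \sum_(a : T i) c *+ 2); last exact: (sum_tag (fun _ => c *+ 2)).
      have -> : (c *+ 2) *+ k = \sum_(i < k) c *+ 2 by rewrite sumr_const card_ord.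
      apply: ler_sum => i _.
      by rewrite sumr_const h1.
    apply: ler_sum => u _.
    apply: le_trans (_ : \sum_(v | E u v) c <= _).
      apply: ler_sum => v _; rewrite /c ler_sqrt; last first.
        by apply: addr_ge0; apply: sqr_ge0.
      by apply: lerD; apply: sq_mono.
    have -> : \sum_(v | E u v) c = \sum_(v in [set v | E u v]) c.
      by apply: eq_bigl => v; rewrite inE.
    have hd := degle2 u; rewrite /deg in hd.
    by rewrite sumr_const -[c *+ #|_|]mulr_natr -[c *+ 2]mulr_natr ler_wpM2l // ler_nat.
  have kE : 2^-1 * ((c *+ 2) *+ k) = 2 * k%:R * Num.sqrt 2.
    by rewrite -[_ *+ k]mulr_natr -[c *+ 2]mulr_natr cE; field.
  apply: le_anti; apply/andP; split.
  + by rewrite hS0 addr0 -kE.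
  + exact: part1.
Qed.
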